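(* Let $p$ be a binary word of length $l$, and for $i\ge1$ let $r_i$ be the number of runs of $p$ of size $i$. Then for every $k\ge 2$, $$B_{l+1,p}(k)=r_{k-1}.$$
   Context: $c_p(w)$ is the number of occurrences of $p$ as a (not necessarily consecutive) subsequence of the binary word $w$; $B_{n,p}(k)$ is the number of binary words of length $n$ with $c_p(w)=k$. A run is a maximal block of consecutive equal letters; its size is its length. *)

(* Defs.v *)
From mathcomp Require Import all_boot.
Set Implicit Arguments. Unset Strict Implicit. Unset Printing Implicit Defensive.

(* c_p(w): number of occurrences of p as a (not necessarily consecutive)
   subsequence of w, i.e. the number of index subsets of w (encoded as
   selection masks m of length |w|) whose selected letters spell p. *)
Definition occ (p w : seq bool) : nat :=
  #|[pred m : (size w).-tuple bool | mask m w == p]|.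

Definition B (n : nat) (p : seq bool) (k : nat) : nat :=
  #|[pred w : n.-tuple bool | occ p w == k]|.

Definition runAt (p : seq bool) (j i : nat) : bool :=
  [&& 0 < i, j + i <= size p,
      all (fun t => nth false p t == nth false p j) (iota j i),
      (j == 0) || (nth false p j.-1 != nth false p j)
    & (j + i == size p) || (nth false p (j + i) != nth false p j)].

Definition nruns (p : seq bool) (i : nat) : nat :=
  count (fun j => runAt p j i) (iota 0 (size p)).

(* Main.v *)
Require Import Defs.
From mathcomp Require Import all_boot zify.
Set Implicit Arguments. Unset Strict Implicit. Unset Printing Implicit Defensive.
Definition del (i : nat) (s : seq bool) := take i s ++ drop i.+1 s.
Fixpoint runlen (a : bool) (s : seq bool) : nat :=
  if s is b :: s' then (if b == a then (runlen a s').+1 else 0) else 0.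
Lemma count_del_run s :
  count (fun u => del u s == del 0 s) (iota 0 (size s)) = runlen (head false s) s.
Proof.
elim: s => [|x s IH] //=.
rewrite eqxx /= add1n eqxx; congr S.
rewrite -(add0n 1) addnC iotaDl count_map.

case: s IH => [|y s] IH; first by [].
rewrite (eq_count (a2 := fun u => (x == y) && (del u (y :: s) == del 0 (y :: s)))); last first.
  by move=> u; rewrite /preim /= add1n /del /= drop0.
rewrite [RHS]/= eq_sym.
case: eqP => [<-|/eqP hxy].
  by rewrite IH /= eqxx.
by rewrite (eq_count (a2 := pred0)) ?count_pred0.
Qed.

Lemma nth_del i s t : i < size s ->
  nth false (del i s) t = nth false s (if t < i then t else t.+1).
Proof.
move=> hi; rewrite /del nth_cat size_takel ?(ltnW hi) //.
case: ifP => ht; first by rewrite nth_take.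
by rewrite nth_drop; congr nth; lia.
Qed.

Lemma size_del i s : i < size s -> size (del i s) = (size s).-1.
Proof. move=> hi; rewrite /del size_cat size_takel ?(ltnW hi) // size_drop; lia. Qed.

Lemma del_shift i u w : i <= size w -> del (i + u) w = take i w ++ del u (drop i w).
Proof.
move=> hi; rewrite /del takeD -catA drop_drop; congr (_ ++ (_ ++ _)); congr drop; lia.
Qed.

Lemma core w i : i < size w -> (i == 0) || (nth false w i.-1 != nth false w i) ->
  count (fun t => del t w == del i w) (iota 0 (size w)) = runlen (nth false w i) (drop i w).
Proof.
move=> hi hf.
have -> : size w = i + (size w - i) by lia.
rewrite iotaD count_cat add0n.
rewrite (eq_in_count (a2 := pred0)); last first.
  move=> t; rewrite mem_iota add0n => /andP [_ ht] /=.
  apply/negbTE/negP => /eqP E.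
  have := congr1 (fun s => nth false s i.-1) E => /=.
  rewrite !nth_del //; last lia.
  case: ifP => [|_]; first lia.
  case: ifP => [_|]; last lia.
  rewrite prednK; last lia.
  move=> h; move: hf; rewrite h eqxx /= orbF => /eqP h0; lia.
rewrite count_pred0 add0n.
have -> : iota i (size w - i) = map (addn i) (iota 0 (size w - i)) by rewrite -iotaDl addn0.
rewrite count_map.
have hs : size (drop i w) = size w - i by rewrite size_drop.
have -> : nth false w i = head false (drop i w) by rewrite -nth0 nth_drop addn0.
rewrite -hs -(count_del_run (drop i w)).
apply: eq_count => u /=.
have -> : del i w = del (i + 0) w by rewrite addn0.
by rewrite !del_shift ?(ltnW hi) // eqseq_cat // eqxx.
Qed.

Lemma card_count n (P : pred nat) : #|[pred i : 'I_n | P i]| = count P (iota 0 n).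
Proof.
rewrite -sum1_card -sum1_count; have -> : iota 0 n = index_iota 0 n by rewrite /index_iota subn0.
rewrite big_mkord.
by apply: eq_bigl => i; rewrite inE.
Qed.

Definition mk n i := nseq i true ++ false :: nseq (n - i.+1) true.
Lemma mk_size n (i : 'I_n) : size (mk n i) == n.
Proof. have := ltn_ord i; rewrite /mk size_cat /= !size_nseq => h; apply/eqP; lia. Qed.
Definition fm n (i : 'I_n) : n.-tuple bool := Tuple (mk_size i).

Lemma index_mk n i : index false (mk n i) = i.
Proof. by rewrite /mk index_cat mem_nseq andbF size_nseq /= addn0. Qed.

Lemma fm_inj n : injective (@fm n).
Proof.
move=> i j /(congr1 val) /= /(congr1 (index false)); rewrite !index_mk => h.
exact: val_inj.
Qed.

Lemma mask_mk w i : i < size w -> mask (mk (size w) i) w = del i w.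
Proof.
move=> hi; rewrite /mk /del -[X in mask _ X](cat_take_drop i w) mask_cat ?size_nseq ?size_takel ?(ltnW hi) //.
rewrite mask_true ?size_takel ?(ltnW hi) // (drop_nth false hi) /= mask_true //.
by rewrite size_drop; lia.
Qed.

Lemma mask_eq_mk (m w p : seq bool) : size m = size w -> size w = (size p).+1 ->
  mask m w = p -> exists2 i, i < size w & m = mk (size w) i.
Proof.
move=> hm hw hp.
have hc : count id m = size p by rewrite -hp size_mask.
have hn : count (predC id) m = 1 by have := count_predC id m; lia.
have hin : false \in m.
  have : has (predC id) m by rewrite has_count hn.
  by case/hasP => x hx; case: x hx.
set i := index false m.
have hi : i < size m by rewrite index_mem.
have hmi : nth false m i = false by rewrite nth_index.
have E : m = take i m ++ false :: drop i.+1 m by rewrite -hmi -drop_nth // cat_take_drop.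
rewrite {1}E count_cat /= in hn.
have h1 : count (predC id) (take i m) = 0 by lia.
have h2 : count (predC id) (drop i.+1 m) = 0 by lia.
exists i; first by rewrite -hm.
have a1 : all (pred1 true) (take i m).
  apply/allP => x hx; move/eqP: h1; rewrite -leqn0 leqNgt -has_count => /hasPn/(_ x hx).
  by case: x hx.
have a2 : all (pred1 true) (drop i.+1 m).
  apply/allP => x hx; move/eqP: h2; rewrite -leqn0 leqNgt -has_count => /hasPn/(_ x hx).
  by case: x hx.
have e1 : take i m = nseq i true.
  by rewrite (all_pred1P _ _ a1) size_takel // ltnW.
have e2 : drop i.+1 m = nseq (size w - i.+1) true.
  by rewrite (all_pred1P _ _ a2) size_drop hm.
by rewrite {1}E e1 e2.
Qed.

Lemma occ_del p w : size w = (size p).+1 ->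
  occ p w = count (fun i => del i w == p) (iota 0 (size w)).
Proof.
move=> hw; rewrite /occ -card_count -(card_imset _ (@fm_inj (size w))).
apply: eq_card => m; rewrite inE /=.
apply/eqP/imsetP.
  move=> hp; have [i hi hm] := mask_eq_mk (size_tuple m) hw hp.
  exists (Ordinal hi); first by rewrite inE /= -mask_mk // -hm hp.
  by apply: val_inj => /=; rewrite hm.
move=> [i]; rewrite inE => /eqP hp ->.
by rewrite /= mask_mk.
Qed.

Lemma runlen_char a s m : (runlen a s == m) =
  [&& m <= size s, all (fun t => nth false s t == a) (iota 0 m) & (m == size s) || (nth false s m != a)].
Proof.
elim: s m => [|x s IH] [|m] //=.
- by case: (x == a).
- rewrite eqSS; case: (x =P a) => [->|hx] /=.
  + have -> : ((runlen a s).+1 == m.+1) = (runlen a s == m) by [].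
    rewrite IH ltnS; congr andb.
    rewrite -(add0n 1) addnC iotaDl all_map; congr andb.
  + by rewrite andbC.
Qed.

Lemma runlen_drop a p i m : 0 < m -> i <= size p ->
  (runlen a (drop i p) == m) = [&& a == nth false p i, i + m <= size p,
     all (fun t => nth false p t == nth false p i) (iota i m)
   & (i + m == size p) || (nth false p (i + m) != nth false p i)].
Proof.
move=> hm hi; rewrite runlen_char size_drop.
case: (a =P nth false p i) => [->|ha] /=.
  have -> : iota i m = map (addn i) (iota 0 m) by rewrite -iotaDl addn0.
  rewrite all_map nth_drop.
  have -> : (m <= size p - i) = (i + m <= size p) by lia.
  have -> : (m == size p - i) = (i + m == size p) by lia.
  congr andb; congr andb.
  by apply: eq_all => t /=; rewrite nth_drop.
case: m hm => [|m] // _.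
by rewrite /= nth_drop addn0 (negbTE (introN eqP (nesym ha))) !andbF.
Qed.

Definition ins i (a : bool) (p : seq bool) := take i p ++ a :: drop i p.

Lemma size_ins i a p : i <= size p -> size (ins i a p) = (size p).+1.
Proof. by move=> hi; rewrite /ins size_cat /= size_takel // size_drop; lia. Qed.

Lemma del_ins i a p : i <= size p -> del i (ins i a p) = p.
Proof.
move=> hi; rewrite /del /ins take_cat drop_cat size_takel // ltnn ltnNge leqnSn /=.
by rewrite subnn take0 cats0 subSnn drop1 /= cat_take_drop.
Qed.

Lemma ins_del i w : i < size w -> ins i (nth false w i) (del i w) = w.
Proof.
move=> hi; rewrite /ins /del take_cat drop_cat size_takel ?(ltnW hi) // ltnn subnn take0 cats0 drop0.
by rewrite -drop_nth // cat_take_drop.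
Qed.

Lemma nth_ins_lt i a p t : t < i -> i <= size p -> nth false (ins i a p) t = nth false p t.
Proof. by move=> ht hi; rewrite /ins nth_cat size_takel // ht nth_take. Qed.

Lemma nth_ins_eq i a p : i <= size p -> nth false (ins i a p) i = a.
Proof. by move=> hi; rewrite /ins nth_cat size_takel // ltnn subnn. Qed.

Lemma drop_ins i a p : i <= size p -> drop i (ins i a p) = a :: drop i p.
Proof. by move=> hi; rewrite /ins drop_cat size_takel // ltnn subnn drop0. Qed.

Lemma ins_inj i a b p : i <= size p -> (ins i a p == ins i b p) = (a == b).
Proof.
move=> hi; apply/eqP/eqP => [E|->] //.
by rewrite -(nth_ins_eq a hi) E nth_ins_eq.
Qed.

Definition first i (w : seq bool) := (i == 0) || (nth false w i.-1 != nth false w i).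

Lemma Qchar p w i k : size w = (size p).+1 -> i < size w -> 2 <= k ->
  [&& del i w == p, first i w & occ p w == k] =
  runAt p i k.-1 && (w == ins i (nth false p i) p).
Proof.
move=> hw hi hk.
have hip : i <= size p by lia.
case hd: (del i w == p); last first.
  symmetry; apply/andP => [[_ /eqP E]]; move: hd; by rewrite E del_ins // eqxx.
move/eqP: hd => hd.
have Ew : w = ins i (nth false w i) p by rewrite -hd ins_del.
move: (nth false w i) Ew => a Ew; subst w; clear hd.
rewrite /= ins_inj //.
have -> : first i (ins i a p) = (i == 0) || (nth false p i.-1 != a).
  rewrite /first; case: i hi hip {hw} => [|i] //= hi hip.
  by rewrite nth_ins_lt // nth_ins_eq.
case hF: ((i == 0) || (nth false p i.-1 != a)); last first.
  rewrite /=; case: (a =P nth false p i) => [E|]; last by rewrite andbF.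
  by rewrite /runAt -E hF !andbF.
rewrite /= occ_del ?size_ins //.
have hf : first i (ins i a p).
  move: hF; rewrite /first; case: (posnP i) => [->|hp] //= hF.
  rewrite nth_ins_lt ?nth_ins_eq //; lia.
have := core hi hf.
rewrite del_ins // hw drop_ins // nth_ins_eq // => ->.
rewrite /= eqxx.
have -> : ((runlen a (drop i p)).+1 == k) = (runlen a (drop i p) == k.-1).
  by case: k hk.
rewrite runlen_drop //; last by lia.
rewrite /runAt.
case: (a =P nth false p i) => [E|]; last by rewrite andbF.
rewrite -E hF /= andbT (_ : 0 < k.-1) //; lia.
Qed.

Lemma del_eq_nth t i w : t < i -> i < size w -> del t w = del i w ->
  nth false w i.-1 = nth false w i.
Proof.
move=> ht hi E.
have := congr1 (fun s => nth false s i.-1) E => /=.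
rewrite !nth_del //; last lia.
case: ifP => [|_]; first lia.
case: ifP => [_|]; last lia.
by rewrite prednK //; lia.
Qed.

Lemma del_eq_pred i w : 0 < i -> i < size w -> nth false w i.-1 = nth false w i ->
  del i.-1 w = del i w.
Proof.
move=> h0 hi E; apply: (@eq_from_nth _ false); first by rewrite !size_del //; lia.
move=> t _; rewrite !nth_del //; last lia.
case: (ltngtP t i.-1) => h.
- by rewrite (_ : t < i) //; lia.
- by rewrite (_ : (t < i) = false) //; lia.
- by rewrite h (_ : i.-1 < i) ?prednK //; lia.
Qed.

Lemma sum_card (T : finType) (P : pred T) : \sum_(x : T) (P x : nat) = #|[pred x | P x]|.
Proof.
rewrite -sum1_card [RHS]big_mkcond /=; apply: eq_bigr => x _.
by rewrite inE.
Qed.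

Lemma stepA p (w : seq bool) k : size w = (size p).+1 -> 0 < k ->
  (occ p w == k : nat) =
  \sum_(i < size w) [&& del i w == p, first i w & occ p w == k].
Proof.
move=> hw hk.
case: (occ p w =P k) => [E|ne]; last first.
  by rewrite big1 // => i _; rewrite !andbF.
rewrite (eq_bigr (fun i : 'I_(size w) => ((del i w == p) && first i w : nat))); last by move=> i _; rewrite andbT.
rewrite sum_card /=.
have ex : exists j, (j < size w) && (del j w == p).
  move: E; rewrite occ_del // => E.
  have : has (fun i => del i w == p) (iota 0 (size w)) by rewrite has_count E.
  case/hasP => j; rewrite mem_iota => /andP [_ hj] hd; exists j; by rewrite hj hd.
case: (ex_minnP ex) => i0 /andP [hi0 hd0] hmin.
rewrite (@eq_card1 _ (Ordinal hi0)) // => i; rewrite inE /=.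
apply/andP/eqP => [[/eqP hd hf]|->].
  apply: val_inj => /=.
  have h1 : i0 <= i by apply: hmin; rewrite ltn_ord hd eqxx.
  case: (ltngtP i0 i) h1 => // h _.
  have := del_eq_nth h (ltn_ord i); rewrite hd (eqP hd0) => /(_ erefl) e.
  by move: hf; rewrite /first e eqxx orbF; lia.
split=> //=; rewrite /first.
case: (posnP i0) => [->|hp] //=.
apply/negP => /eqP e.
have := del_eq_pred hp hi0 e; rewrite (eqP hd0) => hd1.
have := hmin i0.-1; rewrite hd1 eqxx andbT; lia.
Qed.

Lemma stepA' p (w : seq bool) k : size w = (size p).+1 -> 0 < k ->
  (occ p w == k : nat) =
  \sum_(i < (size p).+1) [&& del i w == p, first i w & occ p w == k].
Proof. by move=> hw hk; rewrite (stepA hw hk) hw. Qed.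

Lemma sum_tuple1 n (s : seq bool) : size s = n -> \sum_(w : n.-tuple bool) (val w == s : nat) = 1.
Proof.
move=> hs; have hs' : size s == n by rewrite hs.
rewrite sum_card (@eq_card1 _ (Tuple hs')) // => w; rewrite inE /=.
Qed.

Theorem mainTheorem4 (p : seq bool) (k : nat) :
  2 <= k -> B (size p).+1 p k = nruns p k.-1.
Proof.
move=> hk.
rewrite /B -sum_card.
rewrite (eq_bigr (fun w : (size p).+1.-tuple bool =>
   \sum_(i < (size p).+1) ([&& del i w == p, first i w & occ p w == k] : nat))); last first.
  by move=> w _; rewrite stepA' ?size_tuple //; lia.
rewrite exchange_big /=.
rewrite (eq_bigr (fun i : 'I_(size p).+1 => (runAt p i k.-1 : nat))); last first.
  move=> i _.
  rewrite (eq_bigr (fun w : (size p).+1.-tuple bool =>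
     (runAt p i k.-1 && (val w == ins i (nth false p i) p) : nat))); last first.
    by move=> w _; rewrite Qchar ?size_tuple.
  case: (runAt p i k.-1) => /=.
    by apply: sum_tuple1; rewrite size_ins // -ltnS.
  by apply: big1.
rewrite sum_card (@card_count _ (fun j => runAt p j k.-1)) /nruns -addn1 iotaD count_cat /= add0n.
have -> : runAt p (size p) k.-1 = false.
  by rewrite /runAt; apply/negbTE; rewrite negb_and; apply/orP; right; rewrite negb_and; apply/orP; left; lia.
by rewrite /= !addn0.
Qed.
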